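(* Let $X_1,\dots,X_n$ be i.i.d. $\mathsf{Bernoulli}(p)$ with $p\in[\frac12,1)$, $Y_k=X_k\oplus V_k$ with $V_1,\dots,V_n$ i.i.d. $\mathsf{Bernoulli}(\alpha)$ independent of $X^n$, $\alpha\in[0,\frac12)$, $\bar\alpha>p$. Let $q=\alpha\bar p+\bar\alpha p$, $\zeta_n(\varepsilon)=\frac{\bar\alpha^n-\varepsilon^n}{(\bar\alpha p)^n-(\alpha\bar p)^n}$, and for each $n$ let $\varepsilon_{\mathsf L}=\varepsilon_{\mathsf L}^{(n)}\in[p,\bar\alpha)$ be such that $\underline{\mathcal{h}}_n^n(\varepsilon)=1-\zeta_n(\varepsilon)q^n$ for all $\varepsilon\in[\varepsilon_{\mathsf L},\bar\alpha]$ (such a number exists). Let $$\Phi(n)=\frac{q^n\bar\alpha^{n-1}}{(\bar\alpha p)^n-(\alpha\bar p)^n}.$$ If $p>\frac12$ and $\alpha>0$, then for all sufficiently large $n$ and all $\varepsilon\in[\varepsilon_{\mathsf L},\bar\alpha]$, $$\underline{\mathcal{h}}_n(\varepsilon)-\mathcal{h}^{\mathsf i}_n(\varepsilon)\ge(\bar\alpha-\varepsilon)[\Phi(1)-\Phi(n)].$$ If $p=\frac12$, then for every $n\ge1$ and every $\varepsilon\in[\varepsilon_{\mathsf L},\bar\alpha]$, $$\mathcal{h}^{\mathsf i}_n(\varepsilon)\le\underline{\mathcal{h}}_n(\varepsilon)\le\mathcal{h}^{\mathsf i}_n(\varepsilon)+\frac{\alpha}{2\bar\alpha}.$$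
   Context: $\bar a=1-a$; $\oplus$ is addition mod 2. $\mathsf{P}_{\mathsf{c}}(X^n|Z^n)=\sum_{z^n}\max_{x^n}P_{X^nZ^n}(x^n,z^n)$. $\underline{\mathcal{h}}_n(\varepsilon)=\sup\{\mathsf{P}_{\mathsf{c}}^{1/n}(Y^n|Z^n): P_{Z^n|Y^n},\ \mathcal{Z}^n=\{0,1\}^n,\ X^n - Y^n - Z^n,\ \mathsf{P}_{\mathsf{c}}^{1/n}(X^n|Z^n)\le\varepsilon\}$ for $\varepsilon\in[p,\bar\alpha]$. $\mathcal{h}^{\mathsf i}_n(\varepsilon)$ is the same supremum restricted to memoryless filters $P_{Z^n|Y^n}(z^n|y^n)=\prod_{k=1}^n\mathsf{W}(z_k|y_k)$ with a single binary channel $\mathsf{W}$. *)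

(* Defs.v *)
From HB Require Import structures.
From mathcomp Require Import all_boot all_order all_algebra.
From mathcomp Require Import all_classical all_reals all_analysis.
Set Implicit Arguments. Unset Strict Implicit. Unset Printing Implicit Defensive.
Import Order.TTheory GRing.Theory Num.Theory.
Local Open Scope classical_set_scope.
Local Open Scope ring_scope.

Section Defs.
Variable R : realType.

Definition bstr (n : nat) := {ffun 'I_n -> bool}.

Definition bern (a : R) (b : bool) : R := if b then a else 1 - a.

Definition PX (p : R) n (x : bstr n) : R := \prod_(k < n) bern p (x k).

(* channel Y_k = X_k xor V_k, V_k i.i.d. Bernoulli(alpha), independent of X^n *)
Definition PYgX (al : R) n (y x : bstr n) : R :=
  \prod_(k < n) bern al (x k (+) y k).

(* a filter P_{Z^n|Y^n}, Z^n in {0,1}^n : W y z = P(Z^n = z | Y^n = y) *)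
Definition is_filter n (W : bstr n -> bstr n -> R) : Prop :=
  (forall y z, 0 <= W y z) /\ (forall y, \sum_(z : bstr n) W y z = 1).

(* joint laws, for the Markov chain X^n - Y^n - Z^n *)
Definition PXZ (p al : R) n (W : bstr n -> bstr n -> R) (x z : bstr n) : R :=
  \sum_(y : bstr n) PX p x * PYgX al y x * W y z.
Definition PYZ (p al : R) n (W : bstr n -> bstr n -> R) (y z : bstr n) : R :=
  \sum_(x : bstr n) PX p x * PYgX al y x * W y z.

Definition Pc n (J : bstr n -> bstr n -> R) : R :=
  \sum_(z : bstr n) \big[Num.max/0]_(a : bstr n) J a z.

Definition PcX (p al : R) n (W : bstr n -> bstr n -> R) := Pc (PXZ p al W).
Definition PcY (p al : R) n (W : bstr n -> bstr n -> R) := Pc (PYZ p al W).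

(* memoryless filter built from a single binary channel w y z = w(z|y) *)
Definition is_bin_channel (w : bool -> bool -> R) : Prop :=
  (forall y z, 0 <= w y z) /\ (forall y, w y false + w y true = 1).
Definition memoryless n (w : bool -> bool -> R) : bstr n -> bstr n -> R :=
  fun y z => \prod_(k < n) w (y k) (z k).

Definition h_low (p al : R) (n : nat) (eps : R) : R :=
  sup [set r | exists W : bstr n -> bstr n -> R, is_filter W /\
        powR (PcX p al W) (n%:R^-1) <= eps /\
        r = powR (PcY p al W) (n%:R^-1)].

Definition h_iid (p al : R) (n : nat) (eps : R) : R :=
  sup [set r | exists w : bool -> bool -> R, is_bin_channel w /\
        powR (PcX p al (@memoryless n w)) (n%:R^-1) <= eps /\
        r = powR (PcY p al (@memoryless n w)) (n%:R^-1)].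

Definition qq (p al : R) : R := al * (1 - p) + (1 - al) * p.

Definition zeta (p al : R) (n : nat) (eps : R) : R :=
  ((1 - al) ^+ n - eps ^+ n) / (((1 - al) * p) ^+ n - (al * (1 - p)) ^+ n).

Definition Phi (p al : R) (n : nat) : R :=
  (qq p al) ^+ n * (1 - al) ^+ n.-1 /
  (((1 - al) * p) ^+ n - (al * (1 - p)) ^+ n).

Definition is_epsL (p al : R) (n : nat) (eL : R) : Prop :=
  p <= eL < 1 - al /\
  forall eps, eL <= eps <= 1 - al ->
    (h_low p al n eps) ^+ n = 1 - zeta p al n eps * (qq p al) ^+ n.

End Defs.

(* Main.v *)
Require Import Defs.
From HB Require Import structures.
From mathcomp Require Import all_boot all_order all_algebra.
From mathcomp Require Import all_classical all_reals all_analysis.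
From mathcomp Require Import ring lra.
Import Order.TTheory GRing.Theory Num.Theory.
Local Open Scope ring_scope.

Section Aux.
Variable R : realType.

Lemma powR_root (c : R) (n : nat) : (1 <= n)%N -> 0 <= c -> powR (c ^+ n) (n%:R^-1) = c.
Proof.
move=> n1 c0; rewrite -powR_mulrn // -powRrM mulfV ?powRr1 //.
by rewrite pnatr_eq0 -lt0n.
Qed.

Lemma root_pow (x : R) (n : nat) : (1 <= n)%N -> 0 <= x -> (powR x (n%:R^-1)) ^+ n = x.
Proof.
move=> n1 x0; rewrite -powR_mulrn ?powR_ge0 // -powRrM mulVf ?powRr1 //.
by rewrite pnatr_eq0 -lt0n.
Qed.

Lemma bigmax_ge (T : finType) (F : T -> R) a : F a <= \big[Num.max/0]_(i : T) F i.
Proof.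
have : a \in index_enum T by rewrite mem_index_enum.
elim: (index_enum T) => // i r IH; rewrite big_cons inE => /orP [/eqP<- | /IH h].
  by rewrite le_max lexx.
by rewrite le_max h orbT.
Qed.

Lemma bigmax_le (T : finType) (F : T -> R) x :
  0 <= x -> (forall i, F i <= x) -> \big[Num.max/0]_(i : T) F i <= x.
Proof. by move=> x0 h; elim/big_rec: _ => // i y _ hy; rewrite ge_max h hy. Qed.

Lemma bigmax_ge0 (T : finType) (F : T -> R) : 0 <= \big[Num.max/0]_(i : T) F i.
Proof. by elim/big_rec: _ => // i y _ hy; rewrite le_max hy orbT. Qed.

Lemma bigmax_bool (F : bool -> R) : (forall b, 0 <= F b) ->
  \big[Num.max/0]_(b : bool) F b = Num.max (F false) (F true).
Proof.
move=> F0; apply/le_anti/andP; split.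
  apply: bigmax_le; first by rewrite le_max F0.
  by case; rewrite le_max lexx ?orbT.
by rewrite ge_max !bigmax_ge.
Qed.

Lemma bigmax_prod n (G : 'I_n -> bool -> R) : (forall k b, 0 <= G k b) ->
  \big[Num.max/0]_(a : {ffun 'I_n -> bool}) \prod_(k < n) G k (a k)
  = \prod_(k < n) \big[Num.max/0]_(b : bool) G k b.
Proof.
move=> G0; apply/le_anti/andP; split.
  apply: bigmax_le; first by apply: prodr_ge0 => k _; exact: bigmax_ge0.
  move=> a; apply: ler_prod => k _; rewrite G0 /=; exact: bigmax_ge.
pose a0 := [ffun k => G k false <= G k true].
have -> : \prod_(k < n) \big[Num.max/0]_(b : bool) G k b = \prod_(k < n) G k (a0 k).
  by apply: eq_bigr => k _; rewrite bigmax_bool // ffunE maxEle; case: ifP.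
exact: (@bigmax_ge _ (fun a : {ffun 'I_n -> bool} => \prod_(k < n) G k (a k)) a0).
Qed.

Lemma sum_prod_bool n (G : 'I_n -> bool -> R) :
  \sum_(a : {ffun 'I_n -> bool}) \prod_(k < n) G k (a k)
  = \prod_(k < n) \sum_(b : bool) G k b.
Proof. by rewrite bigA_distr_bigA. Qed.

Lemma factor_max n (F : bool -> bool -> R) : (forall x z, 0 <= F x z) ->
  \sum_(z : {ffun 'I_n -> bool}) \big[Num.max/0]_(a : {ffun 'I_n -> bool}) \prod_(k < n) F (a k) (z k)
  = (\sum_(z : bool) \big[Num.max/0]_(a : bool) F a z) ^+ n.
Proof.
move=> F0.
rewrite (eq_bigr (fun z : {ffun 'I_n -> bool} => \prod_(k < n) \big[Num.max/0]_(b : bool) F b (z k))); last first.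
  by move=> z _; rewrite (bigmax_prod n (fun k b => F b (z k))).
rewrite (sum_prod_bool n (fun k z => \big[Num.max/0]_(b : bool) F b z)).
by rewrite prodr_const card_ord.
Qed.

Definition f1 (p al : R) (w : bool -> bool -> R) (x z : bool) : R :=
  \sum_(b : bool) bern p x * bern al (x (+) b) * w b z.
Definition g1 (p al : R) (w : bool -> bool -> R) (y z : bool) : R :=
  \sum_(b : bool) bern p b * bern al (b (+) y) * w y z.
Definition A1 p al w := \sum_(z : bool) \big[Num.max/0]_(x : bool) f1 p al w x z.
Definition B1 p al w := \sum_(z : bool) \big[Num.max/0]_(y : bool) g1 p al w y z.

Lemma PXZ_mem p al n w (x z : bstr n) :
  PXZ p al (@memoryless R n w) x z = \prod_(k < n) f1 p al w (x k) (z k).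
Proof.
rewrite /PXZ /PX /PYgX /memoryless.
rewrite (eq_bigr (fun y : bstr n => \prod_(k < n) (bern p (x k) * bern al (x k (+) y k) * w (y k) (z k)))); last first.
  by move=> y _; rewrite -!big_split.
exact: (sum_prod_bool n (fun k b => bern p (x k) * bern al (x k (+) b) * w b (z k))).
Qed.

Lemma PYZ_mem p al n w (y z : bstr n) :
  PYZ p al (@memoryless R n w) y z = \prod_(k < n) g1 p al w (y k) (z k).
Proof.
rewrite /PYZ /PX /PYgX /memoryless.
rewrite (eq_bigr (fun x : bstr n => \prod_(k < n) (bern p (x k) * bern al (x k (+) y k) * w (y k) (z k)))); last first.
  by move=> x _; rewrite -!big_split.
exact: (sum_prod_bool n (fun k b => bern p b * bern al (b (+) y k) * w (y k) (z k))).
Qed.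

Lemma bern_ge0 (a : R) b : 0 <= a <= 1 -> 0 <= bern a b.
Proof. by case/andP=> h0 h1; case: b => /=; lra. Qed.

Lemma PcX_mem (p al : R) n w : 0 <= p <= 1 -> 0 <= al <= 1 -> is_bin_channel w ->
  PcX p al (@memoryless R n w) = (A1 p al w) ^+ n.
Proof.
move=> hp ha [w0 _]; rewrite /PcX /Pc /A1 -factor_max.
  apply: eq_bigr => z _; apply: eq_bigr => x _; exact: PXZ_mem.
move=> x z; apply: sumr_ge0 => b _.
by rewrite !mulr_ge0 ?bern_ge0.
Qed.

Lemma PcY_mem (p al : R) n w : 0 <= p <= 1 -> 0 <= al <= 1 -> is_bin_channel w ->
  PcY p al (@memoryless R n w) = (B1 p al w) ^+ n.
Proof.
move=> hp ha [w0 _]; rewrite /PcY /Pc /B1 -factor_max.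
  apply: eq_bigr => z _; apply: eq_bigr => x _; exact: PYZ_mem.
move=> x z; apply: sumr_ge0 => b _.
by rewrite !mulr_ge0 ?bern_ge0.
Qed.


Lemma A1_ge (p al : R) w x0 x1 : f1 p al w x0 false + f1 p al w x1 true <= A1 p al w.
Proof.
rewrite /A1 big_bool [X in _ <= X]addrC; apply: lerD.
  exact: (@bigmax_ge _ (fun x => f1 p al w x false)).
exact: (@bigmax_ge _ (fun x => f1 p al w x true)).
Qed.

Lemma g1_ge0 (p al : R) w y z : 0 <= p <= 1 -> 0 <= al <= 1 -> is_bin_channel w -> 0 <= g1 p al w y z.
Proof. by move=> hp ha [w0 _]; apply: sumr_ge0 => b _; rewrite !mulr_ge0 ?bern_ge0. Qed.

Lemma B1E (p al : R) w : 0 <= p <= 1 -> 0 <= al <= 1 -> is_bin_channel w ->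
  B1 p al w = Num.max (g1 p al w false true) (g1 p al w true true) +
              Num.max (g1 p al w false false) (g1 p al w true false).
Proof.
move=> hp ha hw; rewrite /B1 big_bool !bigmax_bool //; move=> b; exact: g1_ge0.
Qed.

Lemma key1 (p al : R) w : 2^-1 <= p < 1 -> 0 <= al < 2^-1 -> p < 1 - al -> is_bin_channel w ->
  B1 p al w * ((1 - al) * p - al * (1 - p)) <=
  ((1 - al) * p - al * (1 - p)) - (1 - al - A1 p al w) * qq p al.
Proof.
move=> /andP[hp1 hp2] /andP[ha1 ha2] hpa hw.
have hp : 0 <= p <= 1 by apply/andP; split; lra.
have ha : 0 <= al <= 1 by apply/andP; split; lra.
have hq : 0 <= qq p al by rewrite /qq; nra.
case: (hw) => w0 w1.
have e0 : w false true = 1 - w false false by have := w1 false; lra.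
have e1 : w true true = 1 - w true false by have := w1 true; lra.
have a0 := w0 false false; have a1 := w0 false true.
have b0 := w0 true false; have b1 := w0 true true.
rewrite B1E //.
set a := w false false in e0 a0 a1 *; set b := w true false in e1 b0 b1 *.
have key : forall A0, A0 <= A1 p al w ->
    forall B, B * ((1 - al) * p - al * (1 - p)) <= ((1 - al) * p - al * (1 - p)) - (1 - al - A0) * qq p al ->
    B * ((1 - al) * p - al * (1 - p)) <= ((1 - al) * p - al * (1 - p)) - (1 - al - A1 p al w) * qq p al.
  move=> A0 hA B hB; have := ler_wpM2r hq hA; lra.
have h2p : 0 <= 2 * p - 1 by lra.
have hs : 0 <= 1 - al by lra.
have H1 : 0 <= al * (2 * p - 1) * (1 - al) by rewrite !mulr_ge0.
have H2 : 0 <= al * (2 * p - 1) * (1 - al) * (1 - a) by rewrite !mulr_ge0 // subr_ge0; have := w1 false; lra.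
have H3 : 0 <= al * (2 * p - 1) * (1 - al) * (1 - b) by rewrite !mulr_ge0 // subr_ge0; have := w1 true; lra.
have H5 : 0 <= al * (2 * p - 1) * (1 - al) * a by rewrite !mulr_ge0.
have H4 : 0 <= (al * (1 - p) + (1 - al) * p) * (2 * p - 1) by rewrite mulr_ge0 //; nra.
rewrite !maxEle; case: ifP => _; case: ifP => _.
- apply: (key _ (A1_ge p al w true true)).
  rewrite /f1 /g1 /qq !big_bool /bern /= e0 e1 -/a -/b; lra.
- apply: (key _ (A1_ge p al w false true)).
  rewrite /f1 /g1 /qq !big_bool /bern /= e0 e1 -/a -/b; lra.
- apply: (key _ (A1_ge p al w true false)).
  rewrite /f1 /g1 /qq !big_bool /bern /= e0 e1 -/a -/b; lra.
- apply: (key _ (A1_ge p al w true true)).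
  rewrite /f1 /g1 /qq !big_bool /bern /= e0 e1 -/a -/b; lra.
Qed.


Lemma mem_filter n w : is_bin_channel w -> is_filter (@memoryless R n w).
Proof.
case=> w0 w1; split.
  by move=> y z; apply: prodr_ge0 => k _.
move=> y; rewrite /memoryless (sum_prod_bool n (fun k b => w (y k) b)).
by apply: big1 => k _; rewrite big_bool /= addrC w1.
Qed.

Lemma sum_PX (p : R) n : \sum_(x : bstr n) PX p x = 1.
Proof.
rewrite /PX (sum_prod_bool n (fun k b => bern p b)).
by apply: big1 => k _; rewrite big_bool /bern /=; ring.
Qed.

Lemma sum_PYgX (al : R) n (x : bstr n) : \sum_(y : bstr n) PYgX al y x = 1.
Proof.
rewrite /PYgX (sum_prod_bool n (fun k b => bern al (x k (+) b))).
by apply: big1 => k _; rewrite big_bool /bern /=; case: (x k) => /=; ring.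
Qed.

Lemma Pc_ge0 n (J : bstr n -> bstr n -> R) : 0 <= Pc J.
Proof. by apply: sumr_ge0 => z _; exact: bigmax_ge0. Qed.

Lemma PcY_le1 (p al : R) n W : 0 <= p <= 1 -> 0 <= al <= 1 -> is_filter W ->
  PcY p al (n:=n) W <= 1.
Proof.
move=> hp ha [W0 W1]; rewrite /PcY /Pc.
have J0 : forall y z, 0 <= PYZ p al W y z.
  by move=> y z; apply: sumr_ge0 => x _; rewrite !mulr_ge0 //;
    [apply: prodr_ge0 => k _; exact: bern_ge0 | apply: prodr_ge0 => k _; exact: bern_ge0].
apply: (@le_trans _ _ (\sum_(z : bstr n) \sum_(y : bstr n) PYZ p al W y z)).
  apply: ler_sum => z _; apply: bigmax_le; first by apply: sumr_ge0.
  by move=> a; rewrite (bigD1 a) //= lerDl; apply: sumr_ge0.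
rewrite exchange_big /=.
rewrite (eq_bigr (fun y : bstr n => \sum_(x : bstr n) PX p x * PYgX al y x)); last first.
  move=> y _; rewrite /PYZ exchange_big /=; apply: eq_bigr => x _.
  by rewrite -mulr_sumr W1 mulr1.
rewrite exchange_big /= (eq_bigr (fun x : bstr n => PX p x)) ?sum_PX //.
by move=> x _; rewrite -mulr_sumr sum_PYgX mulr1.
Qed.


Lemma A1_ge0 (p al : R) w : 0 <= A1 p al w.
Proof. by apply: sumr_ge0 => z _; exact: bigmax_ge0. Qed.
Lemma B1_ge0 (p al : R) w : 0 <= B1 p al w.
Proof. by apply: sumr_ge0 => z _; exact: bigmax_ge0. Qed.

Definition lowS (p al : R) n eps : set R := [set r : R | exists W : bstr n -> bstr n -> R, is_filter W /\
        powR (PcX p al W) (n%:R^-1) <= eps /\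
        r = powR (PcY p al W) (n%:R^-1)]%classic.
Definition iidS (p al : R) n eps : set R := [set r : R | exists w : bool -> bool -> R, is_bin_channel w /\
        powR (PcX p al (@memoryless R n w)) (n%:R^-1) <= eps /\
        r = powR (PcY p al (@memoryless R n w)) (n%:R^-1)]%classic.

Lemma low_ub (p al : R) n eps : (1 <= n)%N -> 0 <= p <= 1 -> 0 <= al <= 1 ->
  forall r, lowS p al n eps r -> r <= 1.
Proof.
move=> n1 hp ha r [W [hW [_ ->]]].
have h1 := PcY_le1 p al n W hp ha hW.
have h0 := Pc_ge0 n (PYZ p al W).
rewrite -(ler_pXn2r n1) ?nnegrE ?powR_ge0 // root_pow // expr1n //.
Qed.

Lemma iid_sub_low (p al : R) n eps : (iidS p al n eps `<=` lowS p al n eps)%classic.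
Proof. move=> r [w [hw [h1 h2]]]; exists (memoryless w); split => //; exact: mem_filter. Qed.

Lemma iid_char (p al : R) n eps : (1 <= n)%N -> 0 <= p <= 1 -> 0 <= al <= 1 ->
  forall r, iidS p al n eps r -> exists w, [/\ is_bin_channel w, A1 p al w <= eps & r = B1 p al w].
Proof.
move=> n1 hp ha r [w [hw [h1 ->]]]; exists w.
by rewrite (PcX_mem p al n w hp ha hw) (PcY_mem p al n w hp ha hw) !powR_root ?A1_ge0 ?B1_ge0 // in h1 *.
Qed.

Lemma iid_elem (p al : R) n eps w : (1 <= n)%N -> 0 <= p <= 1 -> 0 <= al <= 1 ->
  is_bin_channel w -> A1 p al w <= eps -> iidS p al n eps (B1 p al w).
Proof.
move=> n1 hp ha hw hA; exists w; split => //.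
by rewrite (PcX_mem p al n w hp ha hw) (PcY_mem p al n w hp ha hw) !powR_root ?A1_ge0 ?B1_ge0.
Qed.

Definition wc : bool -> bool -> R := fun _ z => if z then 0 else 1.

Lemma wc_bin : is_bin_channel wc.
Proof. by split; [case; case => /= | case => /=]; rewrite ?ler01 ?lexx ?addr0. Qed.

Lemma A1_wc (p al : R) : 2^-1 <= p <= 1 -> 0 <= al <= 1 -> A1 p al wc <= p.
Proof.
move=> /andP[hp1 hp2] /andP[ha1 ha2].
rewrite /A1 big_bool -[p]add0r; apply: lerD.
  apply: bigmax_le => // x; rewrite /f1 big_bool /wc /=; lra.
apply: bigmax_le; first lra.
by case; rewrite /f1 big_bool /wc /bern /=; lra.
Qed.


Lemma convex_pow (c v : R) n : 0 <= c <= 1 -> 0 <= v <= 1 ->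
  (1 - c + c * v) ^+ n <= 1 - c + c * v ^+ n.
Proof.
move=> /andP[c0 c1] /andP[v0 v1]; elim: n => [|n IH]; first by rewrite !expr0; lra.
have hv : 0 <= v ^+ n <= 1 by rewrite exprn_ge0 // exprn_ile1.
have hb : 0 <= 1 - c + c * v by nra.
rewrite exprS (@le_trans _ _ ((1 - c + c * v) * (1 - c + c * v ^+ n))) //.
  by rewrite ler_wpM2l.
rewrite exprS; case/andP: hv => hv0 hv1.
have : 0 <= c * (1 - c) * (1 - v) * (1 - v ^+ n) by rewrite !mulr_ge0 // subr_ge0.
nra.
Qed.

Lemma bernoulli_ineq (x : R) n : 0 <= x -> 1 + n%:R * x <= (1 + x) ^+ n.
Proof.
move=> x0; elim: n => [|n IH]; first by rewrite mul0r addr0 expr0.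
rewrite exprS -natr1.
have h1 : 0 <= n%:R * x by rewrite mulr_ge0.
have hx1 : 0 <= 1 + x by lra.
have := ler_wpM2l hx1 IH.
have := mulr_ge0 h1 x0.
nra.
Qed.

Lemma hlow_ge0 (p al : R) n eps : (1 <= n)%N -> 2^-1 <= p <= 1 -> 0 <= al <= 1 -> p <= eps ->
  0 <= h_low p al n eps.
Proof.
move=> n1 hp ha he.
have hp' : 0 <= p <= 1 by case/andP: hp => h1 h2; apply/andP; split => //; lra.
change (0 <= sup (lowS p al n eps)).
have hin : lowS p al n eps (B1 p al wc).
  apply: iid_sub_low; apply: iid_elem => //; first exact: wc_bin.
  exact: (le_trans (A1_wc p al hp ha)).
apply: (le_trans (B1_ge0 p al wc)); apply: ub_le_sup => //.
by exists 1; move=> r hr; exact: (low_ub p al n eps n1 hp' ha r hr).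
Qed.


Lemma Phi1E (p al : R) : Phi p al 1 = qq p al / ((1 - al) * p - al * (1 - p)).
Proof. by rewrite /Phi /= expr0 mulr1 !expr1. Qed.

Lemma hiid_le (p al : R) n eps : 2^-1 <= p < 1 -> 0 <= al < 2^-1 -> p < 1 - al ->
  (1 <= n)%N -> p <= eps ->
  h_iid p al n eps <= 1 - (1 - al - eps) * Phi p al 1.
Proof.
move=> hp ha hpa n1 he.
have hp' : 0 <= p <= 1 by case/andP: hp => h1 h2; apply/andP; split; lra.
have hp'' : 2^-1 <= p <= 1 by case/andP: hp => h1 h2; apply/andP; split; lra.
have ha' : 0 <= al <= 1 by case/andP: ha => h1 h2; apply/andP; split; lra.
change (sup (iidS p al n eps) <= 1 - (1 - al - eps) * Phi p al 1); apply: ge_sup.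
  exists (B1 p al wc); apply: iid_elem => //; first exact: wc_bin.
  exact: (le_trans (A1_wc p al hp'' ha') he).
move=> r hr; have [w [hw hA ->]] := iid_char p al n eps n1 hp' ha' r hr.
have K := key1 p al w hp ha hpa hw.
rewrite Phi1E.
case/andP: hp => hp1 hp2; case/andP: ha => ha1 ha2.
have hD : 0 < (1 - al) * p - al * (1 - p) by nra.
have hq : 0 <= qq p al by rewrite /qq; nra.
set D := (1 - al) * p - al * (1 - p) in K hD *.
set t := qq p al / D.
have ht : qq p al = t * D by rewrite /t divfK // gt_eqF.
have ht0 : 0 <= t by rewrite /t divr_ge0 // ltW.
rewrite ht in K.
have hA' : 0 <= eps - A1 p al w by rewrite subr_ge0.
have := mulr_ge0 ht0 hA'.
nra.
Qed.


Lemma part1 (p al : R) : 2^-1 <= p < 1 -> 0 <= al < 2^-1 -> p < 1 - al ->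
  2^-1 < p -> 0 < al ->
    forall eL : nat -> R, (forall n : nat, (1 <= n)%N -> is_epsL p al n (eL n)) ->
    exists N : nat, forall n : nat, (N <= n)%N -> (1 <= n)%N ->
      forall eps : R, eL n <= eps <= 1 - al ->
        h_low p al n eps - h_iid p al n eps >=
          (1 - al - eps) * (Phi p al 1 - Phi p al n).
Proof.
move=> hp ha hpa hp2 ha0 eL heL.
have hp'' : 2^-1 <= p <= 1 by case/andP: hp => h1 h2; apply/andP; split; lra.
have ha' : 0 <= al <= 1 by case/andP: ha => h1 h2; apply/andP; split; lra.
case/andP: (hp) => hp1 hp3; case/andP: (ha) => ha1 ha2.
set q := qq p al.
have hq : 0 < q by rewrite /q /qq; nra.
have hpq : q < p by rewrite /q /qq; nra.
set r0 := p / q.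
have hr0 : 1 < r0 by rewrite /r0 ltr_pdivlMr // mul1r.
exists (Num.trunc ((r0 - 1)^-1)).+1 => n hN n1 eps /andP[he1 he2].
have [hepsL _] := heL n n1; case/andP: hepsL => hpe _.
have hpeps : p <= eps by apply: le_trans hpe he1.
have Hi := hiid_le p al n eps hp ha hpa n1 hpeps.
have hNn : (Num.trunc ((r0 - 1)^-1)).+1%:R <= n%:R :> R by rewrite ler_nat.
have hlt := truncnS_gt ((r0 - 1)^-1).
have hnr : 1 <= n%:R * (r0 - 1).
  have h0 : 0 < r0 - 1 by lra.
  have : (r0 - 1)^-1 < n%:R by lra.
  by rewrite -div1r ltr_pdivrMr // => /ltW.
have hr2 : 2 <= r0 ^+ n.
  have := bernoulli_ineq (r0 - 1) n ltac:(lra).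
  have -> : 1 + (r0 - 1) = r0 by ring.
  lra.
set s := 1 - al.
have hs : 0 < s by rewrite /s; lra.
set Dn := ((1 - al) * p) ^+ n - (al * (1 - p)) ^+ n.
have hpn : 2 * q ^+ n <= p ^+ n.
  have -> : p = q * r0 by rewrite /r0 mulrC divfK // gt_eqF.
  rewrite exprMn; have := exprn_ge0 n (ltW hq); nra.
have hapn : (al * (1 - p)) ^+ n <= (s * q) ^+ n.
  apply: lerXn2r; rewrite ?nnegrE; first by rewrite mulr_ge0 //; lra.
    by rewrite mulr_ge0 //; lra.
  rewrite /s /q /qq; nra.
have hsqn : 0 < s ^+ n * q ^+ n by rewrite mulr_gt0 // exprn_gt0.
have hDn : s ^+ n * q ^+ n <= Dn.
  rewrite /Dn -/s !exprMn; rewrite !exprMn in hapn.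
  have := ler_wpM2l (exprn_ge0 n (ltW hs)) hpn; lra.
have hDn0 : 0 < Dn by lra.
have [m hm] : exists m, n = m.+1 by case: (n) n1 => // m _; exists m.
subst n.
set c := s * Phi p al m.+1.
have hcE : c * Dn = s ^+ m.+1 * q ^+ m.+1.
  rewrite /c /Phi /= -/q -/s -/Dn !exprS.
  by field; rewrite gt_eqF.
have hc0 : 0 <= c by have := ltW hsqn; rewrite -hcE; nra.
have hc1 : c <= 1 by rewrite -hcE in hDn; nra.
set v := eps / s.
have hv0 : 0 <= v by rewrite /v divr_ge0 //; lra.
have hv1 : v <= 1 by rewrite /v ler_pdivrMr // mul1r.
have [_ hE] := heL m.+1 isT.
have := hE eps (introT andP (conj he1 he2)).
have hz : zeta p al m.+1 eps * qq p al ^+ m.+1 = c * (1 - v ^+ m.+1).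
  have hsn : s ^+ m.+1 != 0 by rewrite expf_neq0 // gt_eqF.
  rewrite /zeta -/s -/q -/Dn /v expr_div_n.
  have hc' : c = s ^+ m.+1 * q ^+ m.+1 / Dn by rewrite -hcE mulfK // gt_eqF.
  rewrite hc'; field; rewrite hsn gt_eqF //.
rewrite hz => hh.
have hcv := convex_pow c v m.+1 (introT andP (conj hc0 hc1)) (introT andP (conj hv0 hv1)).
have hl0 := hlow_ge0 p al m.+1 eps isT hp'' ha' hpeps.
have hb : 0 <= 1 - c + c * v by nra.
have hlow : 1 - c + c * v <= h_low p al m.+1 eps.
  by rewrite -(ler_pXn2r (n := m.+1) isT) ?nnegrE // hh; lra.
have hcv' : 1 - c + c * v = 1 - (1 - al - eps) * Phi p al m.+1.
  by rewrite /c /v -/s; field; rewrite gt_eqF.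
rewrite /s; rewrite /s in hcv'.
lra.
Qed.


Definition wz (t : R) : bool -> bool -> R :=
  fun y z => if y then (if z then 1 else 0) else (if z then t else 1 - t).

Lemma part2 (p al : R) : 2^-1 <= p < 1 -> 0 <= al < 2^-1 -> p < 1 - al ->
  p = 2^-1 ->
    forall n : nat, (1 <= n)%N -> forall eL : R, is_epsL p al n eL ->
      forall eps : R, eL <= eps <= 1 - al ->
        h_iid p al n eps <= h_low p al n eps /\
        h_low p al n eps <= h_iid p al n eps + al / (2 * (1 - al)).
Proof.
move=> hp ha hpa hp12 n n1 eL [/andP[hpe _] hE] eps /andP[he1 he2].
have hp'' : 2^-1 <= p <= 1 by case/andP: hp => h1 h2; apply/andP; split; lra.
have hp' : 0 <= p <= 1 by case/andP: hp => h1 h2; apply/andP; split; lra.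
have ha' : 0 <= al <= 1 by case/andP: ha => h1 h2; apply/andP; split; lra.
case/andP: (ha) => ha1 ha2.
have hpeps : p <= eps by apply: le_trans hpe he1.
have hwc : iidS p al n eps (B1 p al wc).
  apply: iid_elem => //; first exact: wc_bin.
  exact: (le_trans (A1_wc p al hp'' ha') hpeps).
have hlowsup : has_sup (lowS p al n eps).
  split; first by exists (B1 p al wc); apply: iid_sub_low.
  by exists 1; move=> r hr; exact: (low_ub p al n eps n1 hp' ha' r hr).
have hiidub : has_ubound (iidS p al n eps).
  by exists 1; move=> r hr; exact: (low_ub p al n eps n1 hp' ha' r (@iid_sub_low p al n eps r hr)).
split.
  change (sup (iidS p al n eps) <= sup (lowS p al n eps)).
  apply: sup_le => //; last by exists (B1 p al wc).
  by move=> r hr; exists r; split => //; apply: iid_sub_low.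
(* lower bound on h_iid through a Z-channel *)
have h12 : 0 < 1 - 2 * al by lra.
set t := 2 * (1 - al - eps) / (1 - 2 * al).
have ht0 : 0 <= t by rewrite /t divr_ge0 //; lra.
have ht1 : t <= 1 by rewrite /t ler_pdivrMr // mul1r; lra.
have hwz : is_bin_channel (wz t).
  by split; [case; case => /=; lra | case => /=; lra].
have hA : A1 p al (wz t) <= eps.
  rewrite /A1 big_bool.
  apply: (@le_trans _ _ ((al * t + (1 - al)) / 2 + (1 - al) * (1 - t) / 2)).
    apply: lerD; apply: bigmax_le.
    - by rewrite divr_ge0 //; nra.
    - by case; rewrite /f1 big_bool /wz /bern /= hp12; nra.
    - by rewrite divr_ge0 //; nra.
    - by case; rewrite /f1 big_bool /wz /bern /= hp12; nra.
  have -> : (al * t + (1 - al)) / 2 + (1 - al) * (1 - t) / 2 = eps.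
    by rewrite /t; field; rewrite gt_eqF.
  done.
have hB : (eps - al) / (1 - 2 * al) <= B1 p al (wz t).
  rewrite B1E //.
  apply: (@le_trans _ _ (g1 p al (wz t) true true + g1 p al (wz t) false false)).
    have -> : (eps - al) / (1 - 2 * al) = 1 - t / 2.
      by rewrite /t; field; rewrite gt_eqF.
    rewrite /g1 !big_bool /wz /bern /= hp12; lra.
  by apply: lerD; rewrite le_max lexx ?orbT.
have hiid : (eps - al) / (1 - 2 * al) <= h_iid p al n eps.
  apply: (le_trans hB); apply: ub_le_sup => //.
  exact: iid_elem.
have hl0 := hlow_ge0 p al n eps n1 hp'' ha' hpeps.
have hh := hE eps (introT andP (conj he1 he2)).
have hqq : qq p al = 2^-1 by rewrite /qq hp12; field.
have hp1 : 1 - p = 2^-1 by rewrite hp12; field.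
rewrite /zeta hqq hp1 -hp12 !exprMn in hh.
set S := (1 - al) ^+ n in hh; set E := eps ^+ n in hh; set Y := al ^+ n in hh.
set k := p ^+ n in hh.
have hk : 0 < k by rewrite /k exprn_gt0 // hp12.
have hY0 : 0 <= Y by rewrite /Y exprn_ge0.
have hYS : Y < S.
  have h : al < 1 - al by lra.
  by rewrite /Y /S (ltrXn2r n ha1 h) -lt0n.
have hE0 : 0 <= E by rewrite /E exprn_ge0 //; lra.
have hES : E <= S by rewrite /E /S lerXn2r // nnegrE; lra.
have hS : 0 < S by lra.
have hfr : (S - E) / (S * k - Y * k) * k = (S - E) / (S - Y).
  have hSY : 0 < S - Y by rewrite subr_gt0.
  by field; rewrite gt_eqF //= -mulrBl gt_eqF // mulr_gt0.
rewrite hfr in hh.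
have hup : h_low p al n eps <= eps / (1 - al).
  rewrite -(ler_pXn2r n1) ?nnegrE //; last by rewrite divr_ge0 //; lra.
  rewrite hh expr_div_n -/E -/S.
  set u := (S - E) / (S - Y).
  have hu : u * (S - Y) = S - E by rewrite /u divfK // gt_eqF // subr_gt0.
  have hu0 : 0 <= u by rewrite /u divr_ge0 //; lra.
  set z := E / S.
  have hz : z * S = E by rewrite /z divfK // gt_eqF.
  have := mulr_ge0 hu0 hY0.
  nra.
have hfin : eps / (1 - al) <= (eps - al) / (1 - 2 * al) + al / (2 * (1 - al)).
  rewrite -subr_ge0.
  have -> : (eps - al) / (1 - 2 * al) + al / (2 * (1 - al)) - eps / (1 - al)
          = al * (2 * eps - 1) / (2 * (1 - al) * (1 - 2 * al)).
    by field; rewrite !gt_eqF //; lra.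
  apply: divr_ge0; first by apply: mulr_ge0 => //; rewrite hp12 in hpeps; lra.
  by apply: mulr_ge0; lra.
lra.
Qed.


End Aux.

Theorem corollary3 (R : realType) (p al : R) :
  2^-1 <= p < 1 -> 0 <= al < 2^-1 -> p < 1 - al ->
  (* case p > 1/2, alpha > 0 *)
  ((2^-1 < p -> 0 < al ->
    forall eL : nat -> R, (forall n : nat, (1 <= n)%N -> is_epsL p al n (eL n)) ->
    exists N : nat, forall n : nat, (N <= n)%N -> (1 <= n)%N ->
      forall eps : R, eL n <= eps <= 1 - al ->
        h_low p al n eps - h_iid p al n eps >=
          (1 - al - eps) * (Phi p al 1 - Phi p al n))
  /\
  (* case p = 1/2 *)
  (p = 2^-1 ->
    forall n : nat, (1 <= n)%N -> forall eL : R, is_epsL p al n eL ->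
      forall eps : R, eL <= eps <= 1 - al ->
        h_iid p al n eps <= h_low p al n eps /\
        h_low p al n eps <= h_iid p al n eps + al / (2 * (1 - al)))).
Proof.
move=> hp ha hpa; split.
  exact: part1.
exact: part2.
Qed.
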